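(* The numbers $P_{1^{-1}2^{1}3^{-1}4^{-1}6^{3}12^{-1}}(n)$, defined by $\sum_{n\ge0}P_{1^{-1}2^{1}3^{-1}4^{-1}6^{3}12^{-1}}(n)q^n=\frac{f_2f_6^3}{f_1f_3f_4f_{12}}$, form a $3$-convolutive sequence.
   Context: $f_i:=(q^i;q^i)_\infty=\prod_{k\ge1}(1-q^{ik})$. A sequence $(a_n)_{n\ge0}$ is $m$-convolutive if $\sum_{n\ge0}a_{mn}q^n=\big(\sum_{n\ge0}a_nq^n\big)^m$. *)

(* Defs.v *)
From mathcomp Require Import all_boot all_algebra.
Set Implicit Arguments. Unset Strict Implicit. Unset Printing Implicit Defensive.
Import GRing.Theory.
Local Open Scope ring_scope.

Definition series := nat -> int.

Definition smul (a b : series) : series :=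
  fun n => \sum_(i < n.+1) a i * b (n - i)%N.

Definition sone : series := fun n => (n == 0%N)%:R.

Definition one_minus_qk (k : nat) : series :=
  fun n => if n == 0%N then 1 else if n == k then -1 else 0.

(* 1/(1 - q^k) = sum_j q^(k j)  (for k >= 1) *)
Definition inv_one_minus_qk (k : nat) : series :=
  fun n => if (k %| n)%N then 1 else 0.

(* Partial products: prod_{k=1}^{M} (1 - q^{ik}) = f_i truncated, and its inverse. *)
Definition f_part (i M : nat) : series :=
  foldr smul sone [seq one_minus_qk (i * k) | k <- iota 1 M].
Definition finv_part (i M : nat) : series :=
  foldr smul sone [seq inv_one_minus_qk (i * k) | k <- iota 1 M].

Definition gen_part (M : nat) : series :=
  smul (f_part 2 M) (smul (f_part 6 M) (smul (f_part 6 M) (smul (f_part 6 M)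
    (smul (finv_part 1 M) (smul (finv_part 3 M) (smul (finv_part 4 M) (finv_part 12 M))))))).

(* Coefficients of the infinite product: the n-th coefficient of the q-adic limit
   equals that of the partial product with factors k = 1..n (factors with k > n are
   1 + O(q^{n+1})). *)
Definition P (n : nat) : int := gen_part n n.

Definition spow (a : series) (m : nat) : series := iter m (smul a) sone.
Definition convolutive (m : nat) (a : series) : Prop :=
  forall n, a (m * n)%N = spow a m n.

(* Main.v *)
Require Import Defs.
From mathcomp Require Import all_boot all_algebra.
From HB Require Import structures.
From mathcomp Require Import boolp.
From mathcomp Require Import ring zify.
Set Implicit Arguments. Unset Strict Implicit. Unset Printing Implicit Defensive.
Import GRing.Theory.
Local Open Scope ring_scope.

(* Formal power series over int with a comRing structure,
   infinite products as limits, Jacobi-triple-product specialisations via the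
   q-binomial theorem, and 3-dissection via the norm x0^3+x1^3+x2^3-3x0x1x2. *)

Definition fps : Type := nat -> int.
HB.instance Definition _ := gen_eqMixin fps.
HB.instance Definition _ := gen_choiceMixin fps.

Definition fadd (a b : fps) : fps := fun n => a n + b n.
Definition fopp (a : fps) : fps := fun n => - a n.
Definition fzero : fps := fun _ => 0.
Lemma faddA : associative fadd.
Proof. by move=> a b c; apply: funext => n; rewrite /fadd addrA. Qed.
Lemma faddC : commutative fadd.
Proof. by move=> a b; apply: funext => n; rewrite /fadd addrC. Qed.
Lemma fadd0 : left_id fzero fadd.
Proof. by move=> a; apply: funext => n; rewrite /fadd add0r. Qed.
Lemma faddN : left_inverse fzero fopp fadd.
Proof. by move=> a; apply: funext => n; rewrite /fadd /fopp addNr. Qed.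
HB.instance Definition _ := GRing.isZmodule.Build fps faddA faddC fadd0 faddN.

Definition tr (n : nat) (a : fps) : {poly int} := \poly_(i < n.+1) a i.

Lemma smul_poly (a b : fps) (P Q : {poly int}) m :
  (forall i, (i <= m)%N -> P`_i = a i) -> (forall i, (i <= m)%N -> Q`_i = b i) ->
  smul a b m = (P * Q)`_m.
Proof.
move=> HP HQ; rewrite coefM /smul; apply: eq_bigr => i _.
by rewrite HP ?HQ // ?leq_subr // -ltnS.
Qed.

Lemma smul_polyT (a b : fps) m : smul a b m = (tr m a * tr m b)`_m.
Proof. by apply: smul_poly => i Hi; rewrite coef_poly ltnS Hi. Qed.

Lemma smulA : associative smul.
Proof.
move=> a b c; apply: funext => m.
rewrite (@smul_poly a (smul b c) (tr m a) (tr m b * tr m c)); last first.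
  move=> i Hi; apply/esym/smul_poly => j Hj; rewrite coef_poly ltnS;
  by rewrite (leq_trans Hj Hi).
  by move=> i Hi; rewrite coef_poly ltnS Hi.
rewrite (@smul_poly (smul a b) c (tr m a * tr m b) (tr m c)); last first.
  by move=> i Hi; rewrite coef_poly ltnS Hi.
  move=> i Hi; apply/esym/smul_poly => j Hj; rewrite coef_poly ltnS;
  by rewrite (leq_trans Hj Hi).
by rewrite mulrA.
Qed.

Lemma smulC : commutative smul.
Proof. by move=> a b; apply: funext => m; rewrite !smul_polyT mulrC. Qed.

Lemma smul1 : left_id sone smul.
Proof.
move=> a; apply: funext => m; rewrite (@smul_poly sone a 1 (tr m a)).
- by rewrite mul1r coef_poly ltnS leqnn.
- by move=> i _; rewrite coef1 /sone; case: (i == 0%N).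
- by move=> i Hi; rewrite coef_poly ltnS Hi.
Qed.

Lemma smulDl : left_distributive smul fadd.
Proof.
move=> a b c; apply: funext => m; rewrite /smul /fadd -big_split /=.
by apply: eq_bigr => i _; rewrite mulrDl.
Qed.

Lemma sone_neq0 : sone != fzero.
Proof.
apply/eqP => H; have := congr1 (fun f => f 0%N) H; rewrite /sone /fzero /=.
by move/eqP; rewrite oner_eq0.
Qed.

HB.instance Definition _ := GRing.Zmodule_isComNzRing.Build fps smulA smulC smul1 smulDl sone_neq0.

Lemma mulE (a b : fps) : a * b = smul a b. Proof. by []. Qed.
Lemma oneE : (1 : fps) = sone. Proof. by []. Qed.
Lemma addE (a b : fps) n : (a + b) n = a n + b n. Proof. by []. Qed.
Lemma oppE (a : fps) n : (- a) n = - a n. Proof. by []. Qed.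
Lemma zeroE n : (0 : fps) n = 0. Proof. by []. Qed.
Lemma subE (a b : fps) n : (a - b) n = a n - b n. Proof. by []. Qed.


Lemma mulCE (a b : fps) n : (a * b) n = \sum_(i < n.+1) a i * b (n - i)%N.
Proof. by []. Qed.

Definition eqm (N : nat) (x y : fps) := forall i, (i < N)%N -> x i = y i.

Lemma eqm_refl N x : eqm N x x. Proof. by []. Qed.
Lemma eqm_sym N x y : eqm N x y -> eqm N y x. Proof. by move=> H i Hi; rewrite H. Qed.
Lemma eqm_trans N x y z : eqm N x y -> eqm N y z -> eqm N x z.
Proof. by move=> H1 H2 i Hi; rewrite H1 ?H2. Qed.
Lemma eqm_le N M x y : (M <= N)%N -> eqm N x y -> eqm M x y.
Proof. by move=> HMN H i Hi; rewrite H // (leq_trans Hi HMN). Qed.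
Lemma eqmD N x y x' y' : eqm N x y -> eqm N x' y' -> eqm N (x + x') (y + y').
Proof. by move=> H1 H2 i Hi; rewrite !addE H1 ?H2. Qed.
Lemma eqmN N x y : eqm N x y -> eqm N (- x) (- y).
Proof. by move=> H1 i Hi; rewrite !oppE H1. Qed.
Lemma eqmB N x y x' y' : eqm N x y -> eqm N x' y' -> eqm N (x - x') (y - y').
Proof. by move=> H1 H2; apply: eqmD => //; apply: eqmN. Qed.
Lemma eqmM N x y x' y' : eqm N x y -> eqm N x' y' -> eqm N (x * x') (y * y').
Proof.
move=> H1 H2 i Hi; rewrite !mulCE; apply: eq_bigr => j _.
have Hj : (j < N)%N by apply: leq_ltn_trans Hi; rewrite -ltnS.
by rewrite H1 // H2 // (leq_ltn_trans (leq_subr _ _) Hi).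
Qed.
Lemma eqmX N x y k : eqm N x y -> eqm N (x ^+ k) (y ^+ k).
Proof.
move=> H; elim: k => [|k IH]; first by rewrite !expr0.
by rewrite !exprS; apply: eqmM.
Qed.
Lemma eqm_eq x y : (forall N, eqm N x y) -> x = y.
Proof. by move=> H; apply: funext => n; apply: (H n.+1). Qed.

Definition qpow (m : nat) : fps := fun n => (n == m)%:R.

Lemma qpowE m n : qpow m n = (n == m)%:R. Proof. by []. Qed.

Lemma qpow0 : qpow 0 = 1. Proof. by []. Qed.

Lemma qpowM_l m (x : fps) n : (qpow m * x) n = if (m <= n)%N then x (n - m)%N else 0.
Proof.
rewrite mulCE; case: leqP => H.
- rewrite (bigD1 (Ordinal (leq_ltn_trans H (ltnSn n)))) //= qpowE eqxx mul1r.
  rewrite big1 ?addr0 // => j /eqP Hj; rewrite qpowE.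
  case: eqP => [Ej|]; last by rewrite mul0r.
  by exfalso; apply: Hj; apply: val_inj.
- rewrite big1 // => j _; rewrite qpowE; case: eqP => [Ej|]; last by rewrite mul0r.
  by move: (ltn_ord j); rewrite Ej ltnS leqNgt H.
Qed.

Lemma qpowD a b : qpow a * qpow b = qpow (a + b).
Proof.
apply: funext => n; rewrite qpowM_l !qpowE; case: leqP => H.
- by rewrite -(eqn_add2l a) subnKC.
- by case: eqP => // E; move: H; rewrite E ltnNge leq_addr.
Qed.

Lemma qpowX a k : qpow a ^+ k = qpow (a * k).
Proof.
elim: k => [|k IH]; first by rewrite expr0 muln0.
by rewrite exprS IH qpowD mulnS.
Qed.

Lemma qpow_cancel a x y : qpow a * x = qpow a * y -> x = y.
Proof.
move=> H; apply: funext => n; have := congr1 (fun f => f (a + n)%N) H.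
by rewrite !qpowM_l leq_addr addKn.
Qed.

Lemma eqm_qpow a K x y : eqm K x y -> eqm (a + K) (qpow a * x) (qpow a * y).
Proof.
move=> H i Hi; rewrite !qpowM_l; case: leqP => // Ha.
by apply: H; rewrite ltn_subLR.
Qed.

Lemma mul0E (x y : fps) : (x * y) 0%N = x 0%N * y 0%N.
Proof. by rewrite mulCE big_ord1. Qed.

Lemma eqm_cancel0 N (u x : fps) : u 0%N = 1 -> eqm N (u * x) 0 -> eqm N x 0.
Proof.
move=> Hu; elim: N => [|N IH] H i Hi; first by [].
have IH' : eqm N x 0 by apply: IH; apply: eqm_le H.
case: (ltnP i N) => HiN; first by apply: IH'.
have Ei : i = N by apply/eqP; rewrite eqn_leq HiN -ltnS Hi.
have := H i Hi; rewrite zeroE mulCE big_ord_recl /= subn0 Hu mul1r.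
rewrite big1 ?addr0 // => j _; rewrite IH' ?mulr0 //.
rewrite /bump /=; have := ltn_ord j; lia.
Qed.

Lemma eqm_cancel N (u x y : fps) : u 0%N = 1 -> eqm N (u * x) (u * y) -> eqm N x y.
Proof.
move=> Hu H; have : eqm N (x - y) 0.
  apply: (eqm_cancel0 Hu) => i Hi; by rewrite mulrBr subE H // subrr zeroE.
by move=> H2 i Hi; have := H2 i Hi; rewrite subE zeroE => /eqP; rewrite subr_eq0 => /eqP.
Qed.

Lemma fps_cancel (u x y : fps) : u 0%N = 1 -> u * x = u * y -> x = y.
Proof.
move=> Hu H; apply: eqm_eq => N; apply: (eqm_cancel Hu); rewrite H; exact: eqm_refl.
Qed.

Definition prodS (c : nat -> fps) (M : nat) : fps := \prod_(1 <= k < M.+1) c k.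
Definition wf (c : nat -> fps) := forall k, eqm k (c k) 1.
Definition Prod (c : nat -> fps) : fps := fun n => prodS c n n.

Lemma prodS0 c : prodS c 0 = 1. Proof. by rewrite /prodS big_geq. Qed.
Lemma prodS_S c M : prodS c M.+1 = prodS c M * c M.+1.
Proof. by rewrite /prodS big_nat_recr. Qed.

Lemma prodS_stab c n M : wf c -> (n <= M)%N -> eqm n.+1 (prodS c M) (prodS c n).
Proof.
move=> Hc; elim: M => [|M IH] HnM.
  by move: HnM; rewrite leqn0 => /eqP ->; apply: eqm_refl.
case: (ltnP n M.+1) => H.
- rewrite prodS_S; apply: (@eqm_trans _ _ (prodS c M * 1)); last by rewrite mulr1; apply: IH.
  apply: eqmM; first exact: eqm_refl.
  by apply: (eqm_le _ (Hc M.+1)).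
- have -> : n = M.+1 by apply/eqP; rewrite eqn_leq HnM H.
  exact: eqm_refl.
Qed.

Lemma Prod_eqm c n M : wf c -> (n <= M)%N -> eqm n.+1 (Prod c) (prodS c M).
Proof.
move=> Hc HnM i Hi; rewrite /Prod; apply/esym.
by apply: (prodS_stab Hc) => //; apply: leq_trans HnM; rewrite -ltnS.
Qed.

Lemma wf_mul c d : wf c -> wf d -> wf (fun k => c k * d k).
Proof. by move=> Hc Hd k; rewrite -(mulr1 1); apply: eqmM. Qed.

Lemma wf1 : wf (fun _ => 1). Proof. by move=> k; apply: eqm_refl. Qed.

Lemma prodS_mul c d M : prodS (fun k => c k * d k) M = prodS c M * prodS d M.
Proof. by rewrite /prodS big_split. Qed.

Lemma Prod_mul c d : wf c -> wf d -> Prod (fun k => c k * d k) = Prod c * Prod d.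
Proof.
move=> Hc Hd; apply: eqm_eq => N i _.
rewrite {1}/Prod prodS_mul.
by rewrite (eqmM (Prod_eqm Hc (leqnn i)) (Prod_eqm Hd (leqnn i)) (ltnSn i)).
Qed.

Lemma Prod_ext c d : c =1 d -> Prod c = Prod d.
Proof. by move=> H; apply: funext => n; rewrite /Prod /prodS (eq_bigr _ (fun k _ => H k)). Qed.

Lemma prodS1 M : prodS (fun _ => 1) M = 1.
Proof. by rewrite /prodS big1. Qed.

Lemma Prod1 : Prod (fun _ => 1) = 1.
Proof. by apply: funext => n; rewrite /Prod prodS1. Qed.

Lemma Prod_at0 c : Prod c 0%N = 1.
Proof. by rewrite /Prod prodS0. Qed.

Lemma prodS_hom (T : fps -> fps) c M : T 1 = 1 -> (forall x y, T (x * y) = T x * T y) ->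
  T (prodS c M) = prodS (fun k => T (c k)) M.
Proof.
move=> H1 HM; elim: M => [|M IH]; first by rewrite !prodS0.
by rewrite !prodS_S HM IH.
Qed.

Lemma Prod_hom (T : fps -> fps) c : wf c -> wf (fun k => T (c k)) -> T 1 = 1 ->
  (forall x y, T (x * y) = T x * T y) -> (forall N x y, eqm N x y -> eqm N (T x) (T y)) ->
  T (Prod c) = Prod (fun k => T (c k)).
Proof.
move=> Hc HTc H1 HM HC; apply: funext => n.
have := HC _ _ _ (Prod_eqm Hc (leqnn n)) n (ltnSn n).
by rewrite prodS_hom // => ->.
Qed.

Lemma Prod_reindex m d : (0 < m)%N -> (forall i, eqm (m * i) (d i) 1) ->
  Prod (fun j => if (m %| j)%N then d (j %/ m)%N else 1) = Prod d.
Proof.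
move=> Hm Hd.
set c := fun j => _.
have wfc : wf c.
  move=> k; rewrite /c; case: ifP => H; last exact: eqm_refl.
  by have := Hd (k %/ m)%N; rewrite mulnC divnK.
have wfd : wf d.
  by move=> k; apply: (eqm_le _ (Hd k)); rewrite leq_pmull.
have fin : forall n, prodS c (m * n) = prodS d n.
  elim=> [|n IH]; first by rewrite muln0 !prodS0.
  rewrite prodS_S -IH /prodS.
  have Hle : ((m * n).+1 <= m * n.+1)%N by rewrite mulnS; lia.
  rewrite (@big_cat_nat _ _ _ (m * n).+1) //=; last by apply: leqW.
  congr (_ * _).
  rewrite big_nat_recr //= big_nat_cond big1 ?mul1r.
    by rewrite /c dvdn_mulr // mulKn.
  move=> k /andP [/andP [H1 H2] _]; rewrite /c; case: ifP => // Hk.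
  exfalso; move: Hk => /dvdnP [t Ht]; move: H1 H2; rewrite Ht => H1 H2.
  have : (m * n < m * t)%N by rewrite [(m * t)%N]mulnC.
  rewrite ltn_mul2l => /andP [_ Ha].
  have : (m * t < m * n.+1)%N by rewrite [(m * t)%N]mulnC.
  rewrite ltn_mul2l => /andP [_ Hb].
  lia.
apply: funext => n; rewrite /Prod.
rewrite -fin; apply/esym; apply: (prodS_stab wfc) => //.
by rewrite leq_pmull.
Qed.

(* sign twist q -> -q *)
Definition sg (x : fps) : fps := fun n => (-1) ^+ n * x n.

Lemma sgM x y : sg (x * y) = sg x * sg y.
Proof.
apply: funext => n; rewrite /sg !mulCE mulr_sumr; apply: eq_bigr => i _.
have Hi : (i <= n)%N by rewrite -ltnS.
rewrite -{1}(subnKC Hi) exprD; ring.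
Qed.
Lemma sg1 : sg 1 = 1.
Proof. by apply: funext => n; rewrite /sg oneE /sone; case: n => [|n] /=; rewrite ?mulr0 ?expr0 ?mul1r. Qed.
Lemma sgD x y : sg (x + y) = sg x + sg y.
Proof. by apply: funext => n; rewrite /sg !addE mulrDr. Qed.
Lemma sgN x : sg (- x) = - sg x.
Proof. by apply: funext => n; rewrite /sg !oppE mulrN. Qed.
Lemma sgB x y : sg (x - y) = sg x - sg y.
Proof. by rewrite sgD sgN. Qed.
Lemma sgK x : sg (sg x) = x.
Proof. by apply: funext => n; rewrite /sg mulrA -exprMn mulrNN mulr1 expr1n mul1r. Qed.
Lemma sg_eqm N x y : eqm N x y -> eqm N (sg x) (sg y).
Proof. by move=> H i Hi; rewrite /sg H. Qed.
Lemma sg_qpow_even m : ~~ odd m -> sg (qpow m) = qpow m.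
Proof.
move=> H; apply: funext => n; rewrite /sg !qpowE; case: eqP => [->|]; last by rewrite mulr0.
by rewrite -signr_odd (negbTE H) expr0 mul1r.
Qed.
Lemma sg_qpow_odd m : odd m -> sg (qpow m) = - qpow m.
Proof.
move=> H; apply: funext => n; rewrite /sg oppE !qpowE; case: eqP => [->|]; last by rewrite mulr0 oppr0.
by rewrite -signr_odd H expr1 mulN1r.
Qed.

(* dilation q -> q^m *)
Definition Dm (m : nat) (x : fps) : fps := fun n => if (m %| n)%N then x (n %/ m)%N else 0.

Lemma Dm_poly m (x : fps) n : (0 < m)%N ->
  forall i, (i <= n)%N -> ((tr n x) \Po 'X^m)`_i = Dm m x i.
Proof.
move=> Hm i Hi; rewrite coef_comp_poly_Xn // /Dm; case: ifP => // _.
rewrite coef_poly ltnS (leq_trans (leq_div _ _) Hi) //.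
Qed.

Lemma DmM m x y : (0 < m)%N -> Dm m (x * y) = Dm m x * Dm m y.
Proof.
move=> Hm; apply: funext => n; rewrite [Dm m x * _]mulE (@smul_poly _ _ (tr n x \Po 'X^m) (tr n y \Po 'X^m)).
- rewrite -comp_polyM coef_comp_poly_Xn // /Dm; case: ifP => // _.
  rewrite mulE; apply: smul_poly => i Hi; rewrite coef_poly ltnS;
  by rewrite (leq_trans Hi (leq_div _ _)).
- exact: Dm_poly.
- exact: Dm_poly.
Qed.

Lemma Dm1 m : (0 < m)%N -> Dm m 1 = 1.
Proof.
move=> Hm; apply: funext => n; rewrite /Dm oneE /sone; case: n => [|n]; first by rewrite dvdn0 div0n.
case: ifP => // H; have : (0 < n.+1 %/ m)%N by rewrite divn_gt0 // dvdn_leq.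
by rewrite lt0n => /negbTE ->.
Qed.

Lemma DmD m x y : Dm m (x + y) = Dm m x + Dm m y.
Proof. by apply: funext => n; rewrite /Dm !addE; case: ifP; rewrite ?addr0. Qed.
Lemma DmN m x : Dm m (- x) = - Dm m x.
Proof. by apply: funext => n; rewrite /Dm !oppE; case: ifP; rewrite ?oppr0. Qed.
Lemma DmB m x y : Dm m (x - y) = Dm m x - Dm m y.
Proof. by rewrite DmD DmN. Qed.
Lemma Dm_qpow m a : (0 < m)%N -> Dm m (qpow a) = qpow (m * a).
Proof.
move=> Hm; apply: funext => n; rewrite /Dm !qpowE; case: ifP => H.
- by rewrite -{2}(divnK H) mulnC eqn_pmul2l.
- by case: eqP => // E; move: H; rewrite E dvdn_mulr.
Qed.
Lemma Dm_eqm m N x y : eqm N x y -> eqm N (Dm m x) (Dm m y).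
Proof.
move=> H i Hi; rewrite /Dm; case: ifP => // _; apply: H.
by apply: leq_ltn_trans Hi; apply: leq_div.
Qed.
Lemma Dm_at m x n : (0 < m)%N -> Dm m x (m * n)%N = x n.
Proof. by move=> Hm; rewrite /Dm dvdn_mulr // mulKn. Qed.

Lemma sgDm3 x : sg (Dm 3 x) = Dm 3 (sg x).
Proof.
apply: funext => n; rewrite /sg /Dm; case: ifP => H; last by rewrite mulr0.
have E : ((-1 : int) ^+ 3 = -1) by [].
by rewrite -{1}(divnK H) mulnC exprM E.
Qed.

Definition comp (r : nat) (x : fps) : fps := fun n => if (n %% 3 == r)%N then x n else 0.
Definition supp (r : nat) (x : fps) := forall n, (n %% 3 != r)%N -> x n = 0.

Lemma suppM r s x y : supp r x -> supp s y -> supp ((r + s) %% 3) (x * y).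
Proof.
move=> Hx Hy n Hn; rewrite mulCE big1 // => i _.
have Hi : (i <= n)%N by rewrite -ltnS.
case: (eqVneq (i %% 3)%N r) => Er; last by rewrite Hx ?mul0r.
case: (eqVneq ((n - i) %% 3)%N s) => Es; last by rewrite Hy ?mulr0.
by exfalso; move: Hn; rewrite -Er -Es modnDm subnKC // eqxx.
Qed.

Lemma comp_decomp x : x = comp 0 x + comp 1 x + comp 2 x.
Proof.
apply: funext => n; rewrite !addE /comp.
have : (n %% 3 < 3)%N by rewrite ltn_mod.
by case: (n %% 3)%N => [|[|[|k]]] //= _; rewrite ?addr0 ?add0r.
Qed.

Lemma comp_supp r x : supp r (comp r x).
Proof. by move=> n Hn; rewrite /comp (negbTE Hn). Qed.
Lemma comp_id r x : supp r x -> comp r x = x.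
Proof. by move=> H; apply: funext => n; rewrite /comp; case: eqP => // /eqP E; rewrite H. Qed.
Lemma comp_other r s x : supp s x -> r != s -> comp r x = 0.
Proof.
move=> H Hrs; apply: funext => n; rewrite /comp zeroE; case: eqP => // E.
by rewrite H // E.
Qed.
Lemma compD r x y : comp r (x + y) = comp r x + comp r y.
Proof. by apply: funext => n; rewrite /comp !addE; case: ifP; rewrite ?addr0. Qed.
Lemma compN r x : comp r (- x) = - comp r x.
Proof. by apply: funext => n; rewrite /comp !oppE; case: ifP; rewrite ?oppr0. Qed.
Lemma compB r x y : comp r (x - y) = comp r x - comp r y.
Proof. by rewrite compD compN. Qed.
Lemma comp_eqm r N x y : eqm N x y -> eqm N (comp r x) (comp r y).
Proof. by move=> H i Hi; rewrite /comp H. Qed.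

Lemma supp0 r : supp r 0. Proof. by []. Qed.
Lemma suppD r x y : supp r x -> supp r y -> supp r (x + y).
Proof. by move=> Hx Hy n Hn; rewrite addE Hx ?Hy ?addr0. Qed.
Lemma suppN r x : supp r x -> supp r (- x).
Proof. by move=> Hx n Hn; rewrite oppE Hx ?oppr0. Qed.
Lemma supp1 : supp 0 1.
Proof. by move=> [|n] //. Qed.
Lemma supp_qpow a : supp (a %% 3) (qpow a).
Proof. by move=> n Hn; rewrite qpowE; case: eqP => // E; move: Hn; rewrite E eqxx. Qed.
Lemma supp_Dm3 x : supp 0 (Dm 3 x).
Proof. by move=> n Hn; rewrite /Dm; case: ifP => // H; move: H; rewrite /dvdn (negbTE Hn). Qed.

Lemma comp_term r i j x y : (r < 3)%N -> supp i x -> supp j y ->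
  comp r (x * y) = if ((i + j) %% 3 == r)%N then x * y else 0.
Proof.
move=> Hr Hx Hy; have H := suppM Hx Hy; case: eqP => E.
- by rewrite -E in H *; apply: comp_id.
- by apply: (comp_other H); apply/eqP => E2; apply: E; rewrite E2.
Qed.

Section Comps.
Variables x y : fps.
Let a0 := comp 0 x. Let a1 := comp 1 x. Let a2 := comp 2 x.
Let b0 := comp 0 y. Let b1 := comp 1 y. Let b2 := comp 2 y.

Lemma mul_expand : x * y = a0 * b0 + a0 * b1 + a0 * b2 + a1 * b0 + a1 * b1 + a1 * b2
  + a2 * b0 + a2 * b1 + a2 * b2.
Proof. rewrite {1}(comp_decomp x) {1}(comp_decomp y) /a0 /a1 /a2 /b0 /b1 /b2; ring. Qed.

Lemma compT r i j (u v : fps) : (r < 3)%N -> comp r (comp i u * comp j v) =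
  if ((i + j) %% 3 == r)%N then comp i u * comp j v else 0.
Proof. by move=> Hr; apply: comp_term => //; apply: comp_supp. Qed.

Lemma compM0 : comp 0 (x * y) = a0 * b0 + a1 * b2 + a2 * b1.
Proof. rewrite mul_expand !compD !compT //=; rewrite /a0 /a1 /a2 /b0 /b1 /b2; ring. Qed.
Lemma compM1 : comp 1 (x * y) = a0 * b1 + a1 * b0 + a2 * b2.
Proof. rewrite mul_expand !compD !compT //=; rewrite /a0 /a1 /a2 /b0 /b1 /b2; ring. Qed.
Lemma compM2 : comp 2 (x * y) = a0 * b2 + a1 * b1 + a2 * b0.
Proof. rewrite mul_expand !compD !compT //=; rewrite /a0 /a1 /a2 /b0 /b1 /b2; ring. Qed.
End Comps.

Definition Norm3 (x : fps) : fps :=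
  comp 0 x ^+ 3 + comp 1 x ^+ 3 + comp 2 x ^+ 3 - 3%:R * comp 0 x * comp 1 x * comp 2 x.

Lemma Norm3M x y : Norm3 (x * y) = Norm3 x * Norm3 y.
Proof. rewrite /Norm3 compM0 compM1 compM2; ring. Qed.

Lemma comp_1 r : comp r 1 = (r == 0)%N%:R.
Proof.
case: r => [|r]; first by rewrite comp_id //; apply: supp1.
by rewrite (comp_other supp1).
Qed.

Lemma Norm3_1 : Norm3 1 = 1.
Proof. rewrite /Norm3 !comp_1 /=; ring. Qed.

Lemma Norm3_eqm N x y : eqm N x y -> eqm N (Norm3 x) (Norm3 y).
Proof.
move=> H; rewrite /Norm3.
have H0 := comp_eqm 0 H; have H1 := comp_eqm 1 H; have H2 := comp_eqm 2 H.
by apply: eqmB; [apply: eqmD; [apply: eqmD|]|apply: eqmM; [apply: eqmM; [apply: eqmM|]|]];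
  rewrite ?exprS ?expr0; repeat apply: eqmM => //; try apply: eqm_refl.
Qed.

Lemma supp0_mul r (u v : fps) : (r < 3)%N -> supp 0 u -> comp r (u * v) = u * comp r v.
Proof.
move=> Hr Hu; rewrite {1}(comp_decomp v) !mulrDr !compD.
rewrite (comp_term Hr Hu (@comp_supp 0 v)) (comp_term Hr Hu (@comp_supp 1 v)).
rewrite (comp_term Hr Hu (@comp_supp 2 v)) /=.
by case: r Hr => [|[|[|r]]] //= _; rewrite ?addr0 ?add0r ?(comp_id (@comp_supp 0 v)) ?(comp_id (@comp_supp 1 v)) ?(comp_id (@comp_supp 2 v)).
Qed.

Lemma suppM' r s t x y : supp r x -> supp s y -> ((r + s) %% 3 = t)%N -> supp t (x * y).
Proof. by move=> Hx Hy <-; apply: suppM. Qed.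

Lemma supp_cube r x : (r < 3)%N -> supp r x -> supp 0 (x ^+ 3).
Proof.
move=> Hr Hx; rewrite !exprS expr0 mulr1.
case: r Hr Hx => [|[|[|r]]] // _ Hx.
- by apply: (suppM' Hx (suppM' Hx Hx _)).
- by apply: (suppM' Hx (suppM' Hx Hx _)).
- by apply: (suppM' Hx (suppM' Hx Hx _)).
Qed.

Lemma supp_nat k : supp 0 (k%:R : fps).
Proof. by elim: k => [|k IH]; [apply: supp0| rewrite mulrS; apply: suppD => //; apply: supp1]. Qed.

Lemma Norm3_supp x : supp 0 (Norm3 x).
Proof.
rewrite /Norm3.
have S0 := @comp_supp 0 x; have S1 := @comp_supp 1 x; have S2 := @comp_supp 2 x.
apply: suppD; last apply: suppN.
- by apply: suppD; [apply: suppD|]; apply: supp_cube; [|exact: S0| |exact: S1| |exact: S2].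
- apply: (@suppM' 1 2 0 _ _ _ S2 (erefl _)); apply: (@suppM' 0 1 1 _ _ _ S1 (erefl _)).
  by apply: (@suppM' 0 0 0 _ _ (supp_nat 3) S0).
Qed.

Definition fk (k : nat) : fps := Prod (fun j => 1 - qpow (k * j)).
Definition fik (k : nat) : fps := Prod (fun j => inv_one_minus_qk (k * j)).

Lemma eqm_1q N m : (N <= m)%N -> eqm N (1 - qpow m) 1.
Proof.
move=> H i Hi; rewrite subE qpowE; case: eqP => [E|]; last by rewrite subr0.
by move: Hi; rewrite E ltnNge H.
Qed.

Lemma wf_f k : (0 < k)%N -> wf (fun j => 1 - qpow (k * j)).
Proof. by move=> Hk j; apply: eqm_1q; rewrite leq_pmull. Qed.

Lemma wf_fi k : (0 < k)%N -> wf (fun j => inv_one_minus_qk (k * j)).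
Proof.
move=> Hk j i Hi; rewrite /inv_one_minus_qk oneE /sone.
case: i Hi => [|i] Hi; first by rewrite dvdn0.
have : ~~ (k * j %| i.+1)%N.
  apply/negP => /dvdn_leq => /(_ isT) H; move: Hi; rewrite ltnNge.
  by rewrite (leq_trans _ H) // leq_pmull.
by move/negbTE => ->.
Qed.

Lemma omq_inv m : (0 < m)%N -> (1 - qpow m) * inv_one_minus_qk m = 1.
Proof.
move=> Hm; apply: funext => n; rewrite mulrBl mul1r subE qpowM_l /inv_one_minus_qk oneE /sone.
case: n => [|n]; first by rewrite dvdn0 leqNgt Hm subr0.
case: leqP => H.
- by rewrite (dvdn_subl H (dvdnn m)) subrr.
- have : ~~ (m %| n.+1)%N by apply/negP => /(dvdn_leq (ltn0Sn n)); rewrite leqNgt H.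
  by move/negbTE => ->; rewrite subr0.
Qed.

Lemma fk_fik k : (0 < k)%N -> fk k * fik k = 1.
Proof.
move=> Hk; rewrite /fk /fik -Prod_mul.
transitivity (Prod (fun _ => 1)); last exact: Prod1.
apply: funext => n; rewrite /Prod /prodS; congr (_ n).
apply: eq_big_nat => j /andP [Hj _].
  by apply: omq_inv; rewrite muln_gt0 Hk Hj.
- exact: wf_f.
- exact: wf_fi.
Qed.

Lemma wf_ifT (P : pred nat) c : wf c -> wf (fun j => if P j then c j else 1).
Proof. by move=> H j; case: (P j) => //; apply: eqm_refl. Qed.
Lemma wf_ifF (P : pred nat) c : wf c -> wf (fun j => if P j then 1 else c j).
Proof. by move=> H j; case: (P j) => //; apply: eqm_refl. Qed.

Lemma Prod_split (P : pred nat) c : wf c ->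
  Prod c = Prod (fun j => if P j then c j else 1) * Prod (fun j => if P j then 1 else c j).
Proof.
move=> H; rewrite -(Prod_mul (wf_ifT P H) (wf_ifF P H)); apply: Prod_ext => j.
by case: (P j); rewrite ?mulr1 ?mul1r.
Qed.

Lemma wf_T (T : fps -> fps) c : wf c -> T 1 = 1 ->
  (forall N x y, eqm N x y -> eqm N (T x) (T y)) -> wf (fun k => T (c k)).
Proof. by move=> Hc H1 HT k; rewrite -H1; apply: HT. Qed.

Lemma fk0 k : fk k 0%N = 1. Proof. exact: Prod_at0. Qed.
Lemma fik0 k : fik k 0%N = 1. Proof. exact: Prod_at0. Qed.

Lemma Dm_fk m k : (0 < m)%N -> (0 < k)%N -> Dm m (fk k) = fk (m * k).
Proof.
move=> Hm Hk; rewrite /fk (@Prod_hom (Dm m)).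
- by apply: Prod_ext => j; rewrite DmB Dm1 // Dm_qpow // mulnA.
- exact: wf_f.
- by apply: wf_T; [apply: wf_f|apply: Dm1|move=> N x y; apply: Dm_eqm].
- exact: Dm1.
- by move=> x y; apply: DmM.
- by move=> N x y; apply: Dm_eqm.
Qed.

Lemma Dm_fik m k : (0 < m)%N -> (0 < k)%N -> Dm m (fik k) = fik (m * k).
Proof.
move=> Hm Hk; apply: (@fps_cancel (fk (m * k))); first exact: fk0.
rewrite fk_fik ?muln_gt0 ?Hm ?Hk // -Dm_fk // -DmM // fk_fik // Dm1 //.
Qed.

Lemma sg_fk_even k : (0 < k)%N -> sg (fk (2 * k)) = fk (2 * k).
Proof.
move=> Hk; rewrite /fk (@Prod_hom sg).
- apply: Prod_ext => j; rewrite sgB sg1 sg_qpow_even //.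
  by rewrite -mulnA oddM.
- by apply: wf_f; rewrite muln_gt0 Hk.
- by apply: wf_T; [apply: wf_f; rewrite muln_gt0 Hk|apply: sg1|move=> N x y; apply: sg_eqm].
- exact: sg1.
- exact: sgM.
- by move=> N x y; apply: sg_eqm.
Qed.

Lemma sg_fik_even k : (0 < k)%N -> sg (fik (2 * k)) = fik (2 * k).
Proof.
move=> Hk; apply: (@fps_cancel (fk (2 * k))); first exact: fk0.
rewrite fk_fik ?muln_gt0 ?Hk // -{1}sg_fk_even // -sgM fk_fik ?muln_gt0 ?Hk // sg1 //.
Qed.

Lemma eqm_1qX N m e : (N <= m)%N -> eqm N ((1 - qpow m) ^+ e) 1.
Proof. by move=> H; apply: (@eqm_trans _ _ (1 ^+ e)); [apply: eqmX; apply: eqm_1q|rewrite expr1n; apply: eqm_refl]. Qed.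

Lemma fk_sq k : (0 < k)%N -> Prod (fun j => (1 - qpow (k * j)) ^+ 2) = fk k ^+ 2.
Proof.
move=> Hk; rewrite expr2 /fk -(Prod_mul (wf_f Hk) (wf_f Hk)); apply: Prod_ext => j; by rewrite expr2.
Qed.

Lemma fk_cube k : (0 < k)%N -> Prod (fun j => (1 - qpow (k * j)) ^+ 3) = fk k ^+ 3.
Proof.
move=> Hk; rewrite 2!exprS expr1 /fk -(Prod_mul (wf_f Hk) (wf_f Hk)).
rewrite -(Prod_mul (wf_f Hk) (wf_mul (wf_f Hk) (wf_f Hk))).
by apply: Prod_ext => j; rewrite 2!exprS expr1.
Qed.

Lemma sg_f1 : sg (fk 1) * fk 1 * fk 4 = fk 2 ^+ 3.
Proof.
have wf1 := @wf_f 1 isT.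
have wfs : wf (fun j => sg (1 - qpow (1 * j))).
  by apply: wf_T => //; [apply: sg1|move=> N x y; apply: sg_eqm].
have E1 : sg (fk 1) = Prod (fun j => sg (1 - qpow (1 * j))).
  by rewrite /fk (@Prod_hom sg) //; [apply: sg1|apply: sgM|move=> N x y; apply: sg_eqm].
set R := Prod (fun j => if (2 %| j)%N then 1 else 1 - qpow (2 * j)).
have E2 : sg (fk 1) * fk 1 = fk 2 ^+ 2 * R.
  rewrite E1 {2}/fk -Prod_mul //.
  rewrite (@Prod_ext _ (fun j => (if (2 %| j)%N then (1 - qpow j) ^+ 2 else 1) *
                                (if (2 %| j)%N then 1 else 1 - qpow (2 * j)))); last first.
    move=> j; rewrite mul1n sgB sg1; case: ifP => H.
    + by rewrite sg_qpow_even ?mulr1 ?expr2 // -dvdn2 H.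
    + rewrite sg_qpow_odd; last by apply/negbNE; rewrite -dvdn2 H.
      rewrite opprK mul1r mulrDl mul1r mulrBr mulr1 qpowD addnn -mul2n; ring.
  rewrite Prod_mul; last 2 first.
  - by apply: wf_ifT => j; apply: eqm_1qX.
  - by apply: wf_ifF => j; apply: eqm_1q; rewrite leq_pmull.
  congr (_ * _); rewrite -fk_sq //.
  rewrite -(@Prod_reindex 2 (fun i => (1 - qpow (2 * i)) ^+ 2)) //.
    by apply: Prod_ext => j; case: ifP => // H; rewrite mulnC divnK.
  by move=> i; apply: eqm_1qX.
have E3 : fk 2 = fk 4 * R.
  rewrite {1}/fk (Prod_split (fun j => 2 %| j)%N); last exact: wf_f.
  congr (_ * _); rewrite /fk -(@Prod_reindex 2 (fun i => 1 - qpow (4 * i))) //.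
    by apply: Prod_ext => j; case: ifP => // H; rewrite -{1}(divnK H); congr (1 - qpow _); lia.
  by move=> i; apply: eqm_1q; lia.
by rewrite E2 [in RHS]exprS [X in _ = X * _]E3; ring.
Qed.

Lemma comp_qpow r m : comp r (qpow m) = if (m %% 3 == r)%N then qpow m else 0.
Proof.
case: eqP => E; first by rewrite -E; apply: comp_id; apply: supp_qpow.
by apply: (comp_other (@supp_qpow m)); apply/eqP => E2; apply: E; rewrite E2.
Qed.

Lemma Norm3_1q m : Norm3 (1 - qpow m) =
  if (3 %| m)%N then (1 - qpow m) ^+ 3 else 1 - qpow (3 * m).
Proof.
rewrite /Norm3 !compB !comp_1 !comp_qpow /dvdn /= mulnC -qpowX.
have : (m %% 3 < 3)%N by rewrite ltn_mod.
by case: (m %% 3)%N => [|[|[|r]]] //= _; ring.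
Qed.

Lemma Norm3_fk k : (0 < k)%N -> (forall j, (3 %| k * j)%N = (3 %| j)%N) ->
  Norm3 (fk k) * fk (9 * k) = fk (3 * k) ^+ 4.
Proof.
move=> Hk Hdiv.
have Hk3 : (0 < 3 * k)%N by rewrite muln_gt0 Hk.
have Hk9 : (0 < 9 * k)%N by rewrite muln_gt0 Hk.
have E1 : Norm3 (fk k) = Prod (fun j => Norm3 (1 - qpow (k * j))).
  rewrite /fk (@Prod_hom Norm3) //.
  - exact: wf_f.
  - by apply: wf_T; [apply: wf_f|apply: Norm3_1|move=> N x y; apply: Norm3_eqm].
  - exact: Norm3_1.
  - exact: Norm3M.
  - by move=> N x y; apply: Norm3_eqm.
set R := Prod (fun j => if (3 %| j)%N then 1 else 1 - qpow (3 * k * j)).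
have E2 : Norm3 (fk k) = fk (3 * k) ^+ 3 * R.
  rewrite E1 (@Prod_ext _ (fun j => (if (3 %| j)%N then (1 - qpow (k * j)) ^+ 3 else 1) *
                                (if (3 %| j)%N then 1 else 1 - qpow (3 * k * j)))); last first.
    move=> j; rewrite Norm3_1q Hdiv; case: ifP => H; rewrite ?mulr1 ?mul1r //.
    by rewrite mulnA [(3 * k)%N]mulnC.
  rewrite Prod_mul; last 2 first.
  - by apply: wf_ifT => j; apply: eqm_1qX; rewrite leq_pmull.
  - by apply: wf_ifF => j; apply: eqm_1q; rewrite leq_pmull.
  congr (_ * _); rewrite -fk_cube //.
  rewrite -(@Prod_reindex 3 (fun i => (1 - qpow (3 * k * i)) ^+ 3)) //.
    apply: Prod_ext => j; case: ifP => // H.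
    by rewrite -{1}(divnK H); congr ((1 - qpow _) ^+ 3); lia.
  by move=> i; apply: eqm_1qX; nia.
have E3 : fk (3 * k) = fk (9 * k) * R.
  rewrite {1}/fk (Prod_split (fun j => 3 %| j)%N); last exact: wf_f.
  congr (_ * _); rewrite /fk -(@Prod_reindex 3 (fun i => 1 - qpow (9 * k * i))) //.
    by apply: Prod_ext => j; case: ifP => // H; rewrite -{1}(divnK H); congr (1 - qpow _); lia.
  by move=> i; apply: eqm_1q; nia.
by rewrite E2 [in RHS]exprS [X in _ = X * _]E3; ring.
Qed.

Lemma Norm3_f1 : Norm3 (fk 1) * fk 9 = fk 3 ^+ 4.
Proof. by apply: (@Norm3_fk 1) => // j; rewrite mul1n. Qed.

Lemma Norm3_f2 : Norm3 (fk 2) * fk 18 = fk 6 ^+ 4.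
Proof. by apply: (@Norm3_fk 2) => // j; rewrite Gauss_dvdr. Qed.

Fixpoint qb (p : fps) (n m : nat) {struct n} : fps :=
  match n with
  | 0 => if m is 0 then 1 else 0
  | n'.+1 => if m is m'.+1 then qb p n' m'.+1 + p ^+ (n' - m') * qb p n' m' else 1
  end.

Lemma qb_n0 p n : qb p n 0 = 1. Proof. by case: n. Qed.
Lemma qb_SS p n m : qb p n.+1 m.+1 = qb p n m.+1 + p ^+ (n - m) * qb p n m.
Proof. by []. Qed.
Lemma qb_gt p n m : (n < m)%N -> qb p n m = 0.
Proof.
elim: n m => [|n IH] [|m] //= H.
by rewrite !IH ?mulr0 ?addr0 //; lia.
Qed.

Lemma binS2 k : 'C(k.+1, 2) = ('C(k, 2) + k)%N.
Proof. by rewrite binS bin1. Qed.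

Lemma cauchy (p w : fps) n : \prod_(0 <= i < n) (w + p ^+ i) =
  \sum_(0 <= m < n.+1) qb p n m * p ^+ 'C(m, 2) * w ^+ (n - m).
Proof.
elim: n => [|n IH].
  by rewrite big_geq // big_nat1 qb_n0 bin0n expr0 subnn expr0 !mulr1.
rewrite big_nat_recr //= IH mulrDr.
rewrite [RHS]big_nat_recl // bin0n expr0 !mul1r subn0.
rewrite [X in _ = _ + X](@eq_big_nat _ _ _ 0 n.+1 _ (fun k => qb p n k.+1 * p ^+ 'C(k.+1, 2) * w ^+ (n - k) +
   (qb p n k * p ^+ 'C(k, 2) * w ^+ (n - k)) * p ^+ n)); last first.
  move=> k /andP [_ Hk]; rewrite ?qb_SS subSS mulrDl mulrDl; congr (_ + _).
  have E : p ^+ (n - k) * p ^+ 'C(k.+1, 2) = p ^+ 'C(k, 2) * p ^+ n.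
    by rewrite -!exprD; congr (_ ^+ _); rewrite binS2; lia.
  transitivity (qb p n k * w ^+ (n - k) * (p ^+ (n - k) * p ^+ 'C(k.+1, 2))); first ring.
  rewrite E; ring.
rewrite big_split /= addrA; congr (_ + _); last by rewrite mulr_suml.
rewrite [LHS]mulr_suml [LHS]big_nat_recl // qb_n0 bin0n expr0 mul1r mul1r subn0 -exprSr.
congr (_ + _); rewrite [RHS]big_nat_recr //= qb_gt ?mul0r ?addr0 //.
apply: eq_big_nat => k /andP [_ Hk]; rewrite -mulrA -exprSr; congr (_ * _ ^+ _).
lia.
Qed.

Definition poch (p : fps) (k : nat) : fps := \prod_(1 <= j < k.+1) (1 - p ^+ j).
Lemma poch0 p : poch p 0 = 1. Proof. by rewrite /poch big_geq. Qed.
Lemma pochS p k : poch p k.+1 = poch p k * (1 - p ^+ k.+1).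
Proof. by rewrite /poch big_nat_recr. Qed.

Lemma qb_poch p n m : (m <= n)%N -> qb p n m * poch p m * poch p (n - m) = poch p n.
Proof.
elim: n m => [|n IH] m Hm.
  by move: Hm; rewrite leqn0 => /eqP ->; rewrite /= poch0 !mulr1.
case: m Hm => [|m] Hm; first by rewrite qb_n0 poch0 subn0 !mul1r.
rewrite qb_SS subSS; case: (ltngtP m n) => Hmn.
- have IH1 := IH m.+1 Hmn.
  have IH2 := IH m (ltnW Hmn).
  have E1 : (n - m = (n - m.+1).+1)%N by lia.
  have Q1 : poch p (n - m) = poch p (n - m.+1) * (1 - p ^+ (n - m)) by rewrite E1 pochS -E1.
  have E2 : p ^+ (n - m) * p ^+ m.+1 = p ^+ n.+1 by rewrite -exprD; congr (_ ^+ _); lia.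
  transitivity ((qb p n m.+1 * poch p m.+1 * poch p (n - m.+1)) * (1 - p ^+ (n - m)) +
     p ^+ (n - m) * (qb p n m * poch p m * poch p (n - m)) * (1 - p ^+ m.+1)).
    rewrite !Q1 !pochS; move: (p ^+ (n - m)) (p ^+ m.+1) => X Y; ring.
  rewrite IH1 IH2 pochS -E2; ring.
- by move: Hm; rewrite ltnS leqNgt Hmn.
- subst m; rewrite qb_gt // subnn expr0 add0r mul1r poch0 mulr1 pochS.
  have H := IH n (leqnn n); rewrite subnn poch0 mulr1 in H; by rewrite mulrA H.
Qed.

Lemma poch_q a k : poch (qpow a) k = prodS (fun j => 1 - qpow (a * j)) k.
Proof. by rewrite /poch /prodS; apply: eq_bigr => j _; rewrite qpowX. Qed.

Lemma qb_lim a n m : (0 < a)%N -> (m <= n)%N ->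
  eqm (minn m (n - m)).+1 (qb (qpow a) n m * fk a) 1.
Proof.
move=> Ha Hm; set K := (minn m (n - m)).+1.
have wfa := wf_f Ha.
have P1 : forall k, (K <= k.+1)%N -> eqm K (poch (qpow a) k) (fk a).
  move=> k Hk; rewrite poch_q; apply: eqm_sym; apply: (eqm_le Hk).
  exact: Prod_eqm.
apply: (@eqm_cancel _ (fk a)); first exact: fk0.
rewrite mulr1.
apply: (@eqm_trans _ _ (qb (qpow a) n m * poch (qpow a) m * poch (qpow a) (n - m))).
  have -> : fk a * (qb (qpow a) n m * fk a) = qb (qpow a) n m * fk a * fk a by ring.
  apply: eqmM; first apply: eqmM.
  - exact: eqm_refl.
  - by apply: eqm_sym; apply: P1; rewrite ltnS geq_minl.
  - by apply: eqm_sym; apply: P1; rewrite ltnS geq_minr.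
rewrite qb_poch //; apply: P1.
by rewrite ltnS (leq_trans (geq_minl _ _)).
Qed.

Lemma C2 x : (2 * 'C(x, 2) + x = x * x)%N.
Proof. elim: x => [|x IH] //; rewrite binS2; nia. Qed.

Lemma binD2 x y : 'C(x + y, 2) = ('C(x, 2) + 'C(y, 2) + x * y)%N.
Proof. have := C2 (x + y); have := C2 x; have := C2 y; nia. Qed.

Definition Ep (a i : nat) : nat := (a * 'C(i, 2) + i)%N.
Definition Em (a i : nat) : nat := (a * 'C(i, 2) + (a - 1) * i)%N.
Definition exN (a N m : nat) : nat := if (N <= m)%N then Ep a (m - N) else Em a (N - m).

Lemma exN_id a N m : (0 < a)%N -> (0 < N)%N -> (m <= 2 * N)%N ->
  (a * 'C(m, 2) + (a * N - 1) * (2 * N - m) = a * 'C(N, 2) + N * (a * N - 1) + exN a N m)%N.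
Proof.
move=> Ha HN Hm; rewrite /exN /Ep /Em.
have HaN : (0 < a * N)%N by rewrite muln_gt0 Ha.
set M := (a * N - 1)%N.
have HM : (M + 1 = a * N)%N by rewrite /M; lia.
case: leqP => H.
- set i := (m - N)%N; set k := (2 * N - m)%N.
  have Em_ : m = (N + i)%N by rewrite /i; lia.
  have EN : N = (i + k)%N by rewrite /i /k; lia.
  rewrite Em_ binD2.
  clearbody i k M; subst N; nia.
- set i := (N - m)%N.
  have EN : N = (m + i)%N by rewrite /i; lia.
  have Ek : (2 * N - m = N + i)%N by rewrite /i; lia.
  rewrite Ek [in RHS]EN binD2.
  have Ha1 : (a - 1 + 1 = a)%N by lia.
  have Ci := C2 i.
  clearbody i M; subst N; nia.
Qed.

Definition Lfin (a N : nat) : fps :=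
  \prod_(0 <= i < N) ((1 + qpow (a * i + 1)) * (1 + qpow (a * i + (a - 1)))).

Lemma prod_qpow_const N d : \prod_(0 <= i < N) qpow d = qpow (N * d).
Proof.
elim: N => [|N IH]; first by rewrite big_geq // mul0n qpow0.
by rewrite big_nat_recr //= IH qpowD mulSn addnC.
Qed.

Lemma prod_qpow_lin N a : \prod_(0 <= i < N) qpow (a * i) = qpow (a * 'C(N, 2)).
Proof.
elim: N => [|N IH]; first by rewrite big_geq // bin0n muln0 qpow0.
by rewrite big_nat_recr //= IH qpowD binS2 mulnDr.
Qed.

Lemma prodB a N : (0 < a)%N ->
  \prod_(0 <= i < 2 * N) (qpow (a * N - 1) + qpow a ^+ i) =
  qpow (a * 'C(N, 2) + N * (a * N - 1)) * Lfin a N.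
Proof.
move=> Ha; set d := (a * N - 1)%N.
rewrite (@big_cat_nat _ _ _ N) //=; last by lia.
have P1 : \prod_(0 <= i < N) (qpow d + qpow a ^+ i) =
    qpow (a * 'C(N, 2)) * \prod_(0 <= i < N) (1 + qpow (a * i + (a - 1))).
  rewrite (@eq_big_nat _ _ _ 0 N _ (fun i => qpow (a * i) * (1 + qpow (a * (N - i.+1) + (a - 1))))); last first.
    move=> i /andP [_ Hi]; rewrite mulrDr mulr1 qpowD qpowX addrC; congr (_ + qpow _).
    rewrite /d; nia.
  rewrite big_split /= prod_qpow_lin; congr (_ * _).
  by rewrite [RHS](big_nat_rev _ _ 0 N) /=.
have P2 : \prod_(N <= i < 2 * N) (qpow d + qpow a ^+ i) =
    qpow (N * d) * \prod_(0 <= i < N) (1 + qpow (a * i + 1)).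
  rewrite -{1}(add0n N) big_addn.
  have -> : (2 * N - N = N)%N by lia.
  rewrite (@eq_big_nat _ _ _ 0 N _ (fun i => qpow d * (1 + qpow (a * i + 1)))); last first.
    move=> i /andP [_ Hi]; rewrite mulrDr mulr1 qpowD qpowX; congr (_ + qpow _).
    rewrite /d; nia.
  by rewrite big_split /= prod_qpow_const.
rewrite P1 P2 /Lfin big_split /= -qpowD; ring.
Qed.

Lemma sum_coef (I : Type) (r : seq I) (P : pred I) (F : I -> fps) n :
  (\sum_(i <- r | P i) F i) n = \sum_(i <- r | P i) F i n.
Proof. by elim/big_rec2: _ => //= i y1 y2 _ <-; rewrite addE. Qed.

Lemma eqm_sum N (I : Type) (r : seq I) (P : pred I) (F G : I -> fps) :
  (forall i, P i -> eqm N (F i) (G i)) -> eqm N (\sum_(i <- r | P i) F i) (\sum_(i <- r | P i) G i).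
Proof.
move=> H; elim/big_rec2: _ => [|i y1 y2 Pi IH]; first exact: eqm_refl.
by apply: eqmD => //; apply: H.
Qed.

Lemma Lfin_sum a N : (0 < a)%N -> (0 < N)%N ->
  Lfin a N = \sum_(0 <= m < (2 * N).+1) qb (qpow a) (2 * N) m * qpow (exN a N m).
Proof.
move=> Ha HN; apply: (@qpow_cancel (a * 'C(N, 2) + N * (a * N - 1))).
rewrite -prodB // (cauchy (qpow a) (qpow (a * N - 1)) (2 * N)) mulr_sumr.
apply: eq_big_nat => m /andP [_ Hm].
rewrite !qpowX -mulrA qpowD mulrCA qpowD; congr (_ * qpow _).
by rewrite exN_id // mulnC.
Qed.

Lemma Ep_lt a i j : (0 < a)%N -> (i < j)%N -> (Ep a i < Ep a j)%N.
Proof.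
move=> Ha Hij; rewrite /Ep.
have := @leq_bin2l i j 2 (ltnW Hij); move=> HC.
have : (a * 'C(i, 2) <= a * 'C(j, 2))%N by rewrite leq_mul2l HC orbT.
lia.
Qed.

Lemma Em_lt a i j : (2 <= a)%N -> (i < j)%N -> (Em a i < Em a j)%N.
Proof.
move=> Ha Hij; rewrite /Em.
have := @leq_bin2l i j 2 (ltnW Hij); move=> HC.
have : (a * 'C(i, 2) <= a * 'C(j, 2))%N by rewrite leq_mul2l HC orbT.
have : ((a - 1) * i < (a - 1) * j)%N by rewrite ltn_mul2l Hij andbT; lia.
lia.
Qed.

Lemma Ep_Em a i j : (3 <= a)%N -> (0 < j)%N -> Ep a i != Em a j.
Proof.
move=> Ha Hj; case: (leqP i j) => Hij.
- have : (Ep a i <= Ep a j)%N.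
    by case: (ltngtP i j) Hij => // [H _|-> _]; [apply: ltnW; apply: Ep_lt; lia|].
  rewrite /Ep /Em => H1; apply/eqP => E.
  have : ((a - 1) * j > j)%N by nia.
  lia.
- have : (Ep a j.+1 <= Ep a i)%N.
    by case: (ltngtP j.+1 i) Hij => // [H _|-> _]; [apply: ltnW; apply: Ep_lt; lia|].
  rewrite /Ep /Em binS2 => H1; apply/eqP => E.
  nia.
Qed.

Lemma exN_inj a N m1 m2 : (3 <= a)%N -> exN a N m1 = exN a N m2 -> m1 = m2.
Proof.
move=> Ha; rewrite /exN.
have Ha1 : (0 < a)%N by lia.
have Ha2 : (2 <= a)%N by lia.
case: (leqP N m1) => H1; case: (leqP N m2) => H2 E.
- case: (ltngtP (m1 - N) (m2 - N)) => H.
  + by have := @Ep_lt a _ _ Ha1 H; rewrite E ltnn.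
  + by have := @Ep_lt a _ _ Ha1 H; rewrite E ltnn.
  + lia.
- have Hp : (0 < N - m2)%N by lia.
  by have := @Ep_Em a (m1 - N) (N - m2) Ha Hp; rewrite E eqxx.
- have Hp : (0 < N - m1)%N by lia.
  by have := @Ep_Em a (m2 - N) (N - m1) Ha Hp; rewrite E eqxx.
- case: (ltngtP (N - m1) (N - m2)) => H.
  + by have := @Em_lt a _ _ Ha2 H; rewrite E ltnn.
  + by have := @Em_lt a _ _ Ha2 H; rewrite E ltnn.
  + lia.
Qed.

Definition th (a : nat) : fps :=
  fun n => [exists i : 'I_n.+1, (Ep a i == n) || ((0 < i)%N && (Em a i == n))]%:R.

Lemma Ep_ge a i : (i <= Ep a i)%N. Proof. by rewrite /Ep leq_addl. Qed.
Lemma Em_ge a i : (2 <= a)%N -> (i <= Em a i)%N.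
Proof. move=> Ha; rewrite /Em; have : (i <= (a - 1) * i)%N by rewrite leq_pmull; lia. lia. Qed.

Lemma eqm_sum_nat N m n (F G : nat -> fps) : (forall i, (m <= i < n)%N -> eqm N (F i) (G i)) ->
  eqm N (\sum_(m <= i < n) F i) (\sum_(m <= i < n) G i).
Proof. by move=> H; rewrite big_nat_cond [X in eqm _ _ X]big_nat_cond; apply: eqm_sum => i /andP [Hi _]; apply: H. Qed.

Lemma sum_ind K (f : nat -> nat) n : (forall m1 m2, f m1 = f m2 -> m1 = m2) ->
  \sum_(0 <= m < K) ((f m == n)%:R : int) = [exists m : 'I_K, f m == n]%:R.
Proof.
move=> Hf; rewrite big_mkord; case: existsP => [[m0 Hm0]|Hn].
- rewrite (bigD1 m0) //= Hm0 big1 ?addr0 // => m Hm.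
  case: eqP => // E; exfalso; move/eqP: Hm; apply; apply: val_inj; apply: Hf.
  by rewrite E; apply/esym/eqP.
- by rewrite big1 // => m _; case: eqP => // E; exfalso; apply: Hn; exists m; apply/eqP.
Qed.

Lemma th_Lfin a N n : (3 <= a)%N -> (0 < N)%N -> (n <= N)%N -> (Lfin a N * fk a) n = th a n.
Proof.
move=> Ha HN HnN.
have Ha1 : (0 < a)%N by lia.
have Ha2 : (2 <= a)%N by lia.
rewrite Lfin_sum // mulr_suml.
have step : eqm n.+1 (\sum_(0 <= m < (2 * N).+1) qb (qpow a) (2 * N) m * qpow (exN a N m) * fk a)
                     (\sum_(0 <= m < (2 * N).+1) qpow (exN a N m)).
  apply: eqm_sum_nat => m /andP [_ Hm].
  have -> : qb (qpow a) (2 * N) m * qpow (exN a N m) * fk a =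
            qpow (exN a N m) * (qb (qpow a) (2 * N) m * fk a) by ring.
  rewrite -[X in eqm _ _ X]mulr1.
  have Hm' : (m <= 2 * N)%N by rewrite -ltnS.
  have Hq := @eqm_qpow (exN a N m) _ _ _ (@qb_lim a (2 * N) m Ha1 Hm').
  apply: (eqm_le _ Hq).
  have Hge : ((if (N <= m)%N then m - N else N - m) <= exN a N m)%N.
    by rewrite /exN; case: ifP => _; [apply: Ep_ge|apply: Em_ge].
  move: Hge; case: ifP => H Hge; lia.
rewrite (step n (ltnSn n)) sum_coef.
rewrite (eq_bigr (fun m => ((exN a N m == n)%:R : int))); last by move=> m _; rewrite qpowE eq_sym.
rewrite sum_ind; last by move=> m1 m2; apply: exN_inj.
rewrite /th; congr (_%:R); congr (nat_of_bool _); apply/existsP/existsP.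
- move=> [m /eqP Hm]; rewrite /exN in Hm; case: ifP Hm => H Hm.
  + have Hi : (m - N < n.+1)%N by rewrite ltnS -Hm Ep_ge.
    by exists (Ordinal Hi); rewrite /= Hm eqxx.
  + have Hi : (N - m < n.+1)%N by rewrite ltnS -Hm Em_ge.
    exists (Ordinal Hi); rewrite /= Hm eqxx andbT; apply/orP; right; lia.
- move=> [i /orP [/eqP Hi|/andP [Hi0 /eqP Hi]]].
  + have Hm : (N + i < (2 * N).+1)%N by have := ltn_ord i; lia.
    by exists (Ordinal Hm); rewrite /= /exN leq_addr addKn Hi.
  + have Hm : (N - i < (2 * N).+1)%N by lia.
    exists (Ordinal Hm); rewrite /= /exN.
    have Hi' : (i <= N)%N by have := ltn_ord i; lia.
    have -> : (N <= N - i)%N = false by lia.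
    by rewrite subKn // Hi.
Qed.

Definition c4 (k : nat) : fps := if odd k then 1 + qpow k else 1.
Definition c3 (k : nat) : fps := if (3 %| k)%N then 1 else 1 + qpow k.

Lemma eqm_1pq N m : (N <= m)%N -> eqm N (1 + qpow m) 1.
Proof.
move=> H i Hi; rewrite addE qpowE; case: eqP => [E|]; last by rewrite addr0.
by move: Hi; rewrite E ltnNge H.
Qed.

Lemma wf_c4 : wf c4.
Proof. by move=> k; rewrite /c4; case: ifP => _; [apply: eqm_1pq|apply: eqm_refl]. Qed.
Lemma wf_c3 : wf c3.
Proof. by move=> k; rewrite /c3; case: ifP => _; [apply: eqm_refl|apply: eqm_1pq]. Qed.

Lemma Lfin4 N : Lfin 4 N = prodS c4 (4 * N).
Proof.
elim: N => [|N IH]; first by rewrite /Lfin big_geq // muln0 prodS0.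
rewrite /Lfin big_nat_recr //= -/(Lfin 4 N) IH.
have -> : (4 * N.+1 = (4 * N).+4)%N by lia.
rewrite !prodS_S /c4 /= oddM /= !mulr1 -!mulrA; congr (_ * (_ * _)); congr (1 + qpow _); lia.
Qed.

Lemma Lfin3 N : Lfin 3 N = prodS c3 (3 * N).
Proof.
elim: N => [|N IH]; first by rewrite /Lfin big_geq // muln0 prodS0.
rewrite /Lfin big_nat_recr //= -/(Lfin 3 N) IH.
have -> : (3 * N.+1 = (3 * N).+3)%N by lia.
have D1 : (3 %| (3 * N).+1)%N = false by apply/negP => /dvdnP [t Ht]; lia.
have D2 : (3 %| (3 * N).+2)%N = false by apply/negP => /dvdnP [t Ht]; lia.
have D3 : (3 %| (3 * N).+3)%N by apply/dvdnP; exists N.+1; lia.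
rewrite !prodS_S /c3 D1 D2 D3 !mulr1 -!mulrA; congr (_ * (_ * _)); congr (1 + qpow _); lia.
Qed.

Lemma Prod_th (a : nat) (c : nat -> fps) : (3 <= a)%N -> wf c ->
  (forall N, Lfin a N = prodS c (a * N)) -> Prod c * fk a = th a.
Proof.
move=> Ha Hc HL; apply: funext => n.
have HaN : (n <= a * n.+1)%N by nia.
rewrite (eqmM (Prod_eqm Hc HaN) (@eqm_refl n.+1 (fk a)) (ltnSn n)).
by rewrite -HL th_Lfin.
Qed.

Lemma th4 : Prod c4 * fk 4 = th 4.
Proof. by apply: Prod_th => //; [apply: wf_c4|apply: Lfin4]. Qed.
Lemma th3 : Prod c3 * fk 3 = th 3.
Proof. by apply: Prod_th => //; [apply: wf_c3|apply: Lfin3]. Qed.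

Lemma Prod_reindex_f m k : (0 < m)%N -> (0 < k)%N ->
  Prod (fun j => if (m %| j)%N then 1 - qpow (k * j) else 1) = fk (m * k).
Proof.
move=> Hm Hk; rewrite /fk -(@Prod_reindex m (fun i => 1 - qpow (m * k * i))) //.
  apply: Prod_ext => j; case: ifP => // H; congr (1 - qpow _).
  by rewrite -{1}(divnK H); lia.
by move=> i; apply: eqm_1q; nia.
Qed.

Lemma th4_id : th 4 * fk 1 = fk 2 ^+ 2.
Proof.
have wf1 := @wf_f 1 isT.
have E1 := Prod_split odd wf1.
set S := Prod (fun j => if odd j then 1 - qpow (1 * j) else 1) in E1.
have ET : Prod (fun j => if odd j then 1 else 1 - qpow (1 * j)) = fk 2.
  rewrite -(@Prod_reindex_f 2 1) //; apply: Prod_ext => j.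
  by rewrite dvdn2; case: (odd j).
set U := Prod (fun j => if odd j then 1 - qpow (2 * j) else 1).
have EU : S * Prod c4 = U.
  rewrite /S -Prod_mul; last exact: wf_c4; last by apply: wf_ifT.
  apply: Prod_ext => j; rewrite /c4; case: (odd j); rewrite ?mulr1 //.
  by rewrite mul1n mulrBl mul1r mulrDr mulr1 qpowD addnn -mul2n; ring.
have E2 : fk 2 = U * fk 4.
  rewrite {1}/fk (Prod_split odd); last exact: wf_f.
  congr (_ * _); rewrite -(@Prod_reindex_f 2 2) //; apply: Prod_ext => j.
  by rewrite dvdn2; case: (odd j).
have F1 : fk 1 = S * fk 2 by rewrite -ET -E1.
rewrite -th4 F1 E2 -EU; ring.
Qed.

Lemma th3_id : th 3 * fk 1 * fk 6 = fk 2 * fk 3 ^+ 2.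
Proof.
have wf1 := @wf_f 1 isT.
have E1 := Prod_split (fun j => 3 %| j)%N wf1.
set S := Prod (fun j => if (3 %| j)%N then 1 else 1 - qpow (1 * j)) in E1.
have ET : Prod (fun j => if (3 %| j)%N then 1 - qpow (1 * j) else 1) = fk 3.
  by rewrite -(@Prod_reindex_f 3 1).
set U := Prod (fun j => if (3 %| j)%N then 1 else 1 - qpow (2 * j)).
have EU : S * Prod c3 = U.
  rewrite /S -Prod_mul; last exact: wf_c3; last by apply: wf_ifF.
  apply: Prod_ext => j; rewrite /c3; case: (3 %| j)%N; rewrite ?mulr1 //.
  by rewrite mul1n mulrBl mul1r mulrDr mulr1 qpowD addnn -mul2n; ring.
have E2 : fk 2 = fk 6 * U.
  rewrite {1}/fk (Prod_split (fun j => 3 %| j)%N); last exact: wf_f.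
  by congr (_ * _); rewrite -(@Prod_reindex_f 3 2).
have F1 : fk 1 = fk 3 * S by rewrite -ET -E1.
rewrite -th3 F1 E2 -EU; ring.
Qed.

Definition Pr (a n : nat) := exists i, Ep a i = n \/ (0 < i)%N /\ Em a i = n.

Lemma th_ext a b n m : (2 <= a)%N -> (2 <= b)%N -> (Pr a n <-> Pr b m) -> th a n = th b m.
Proof.
move=> Ha Hb [H1 H2]; rewrite /th; congr (_%:R); congr (nat_of_bool _).
have K : forall c p, (2 <= c)%N -> Pr c p <-> [exists i : 'I_p.+1, (Ep c i == p) || (0 < i)%N && (Em c i == p)].
  move=> c p Hc; split.
  - move=> [i [E|[Hi E]]]; apply/existsP.
    + have Hl : (i < p.+1)%N by rewrite ltnS -E Ep_ge.
      by exists (Ordinal Hl); rewrite /= E eqxx.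
    + have Hl : (i < p.+1)%N by rewrite ltnS -E Em_ge.
      by exists (Ordinal Hl); rewrite /= E eqxx Hi orbT.
  - move/existsP => [i /orP [/eqP E|/andP [Hi /eqP E]]]; exists i; [left|right] => //.
apply/idP/idP => H.
- by apply/(K b m Hb); apply: H1; apply/(K a n Ha).
- by apply/(K a n Ha); apply: H2; apply/(K b m Hb).
Qed.

Lemma th_zero a n : (2 <= a)%N -> ~ Pr a n -> th a n = 0.
Proof.
move=> Ha H; rewrite /th; case: existsP => [[i Hi]|_] //; exfalso; apply: H.
by move: Hi => /orP [/eqP E|/andP [Hi /eqP E]]; exists i; [left|right].
Qed.

Lemma split3 i : exists t, i = (3 * t)%N \/ i = (3 * t + 1)%N \/ i = (3 * t + 2)%N.
Proof.
exists (i %/ 3)%N; have := divn_eq i 3; have : (i %% 3 < 3)%N by rewrite ltn_mod.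
case: (i %% 3)%N => [|[|[|r]]] // _ E; lia.
Qed.
Lemma split2 i : exists t, i = (2 * t)%N \/ i = (2 * t + 1)%N.
Proof.
exists (i %/ 2)%N; have := divn_eq i 2; have : (i %% 2 < 2)%N by rewrite ltn_mod.
case: (i %% 2)%N => [|[|r]] // _ E; lia.
Qed.

Lemma P4_mod2 n : (n %% 3 = 2)%N -> ~ Pr 4 n.
Proof.
move=> Hn [i Hi]; have [t [E|[E|E]]] := split3 i; subst i;
  have := C2 (3 * t); have := C2 (3 * t + 1); have := C2 (3 * t + 2);
  rewrite /Ep /Em in Hi; lia.
Qed.

Lemma P4_P3 k : Pr 4 (3 * k) <-> Pr 3 k.
Proof.
split.
- move=> [i Hi]; have [t [E|[E|E]]] := split3 i; subst i;
    have := C2 (3 * t); have := C2 (3 * t + 1); have := C2 (3 * t + 2);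
    have := C2 (2 * t); have := C2 (2 * t + 1); rewrite /Ep /Em in Hi => *.
  + case: Hi => Hi.
    * by exists (2 * t)%N; left; rewrite /Ep; lia.
    * by exists (2 * t)%N; right; rewrite /Em; split; lia.
  + case: Hi => Hi.
    * exfalso; lia.
    * by exists (2 * t + 1)%N; left; rewrite /Ep; lia.
  + case: Hi => Hi.
    * by exists (2 * t + 1)%N; right; rewrite /Em; split; lia.
    * exfalso; lia.
- move=> [i Hi]; have [t [E|E]] := split2 i; subst i;
    have := C2 (3 * t); have := C2 (3 * t + 1); have := C2 (3 * t + 2);
    have := C2 (2 * t); have := C2 (2 * t + 1); rewrite /Ep /Em in Hi => *.
  + case: Hi => Hi.
    * by exists (3 * t)%N; left; rewrite /Ep; lia.
    * by exists (3 * t)%N; right; rewrite /Em; split; lia.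
  + case: Hi => Hi.
    * by exists (3 * t + 1)%N; right; rewrite /Em; split; lia.
    * by exists (3 * t + 2)%N; left; rewrite /Ep; lia.
Qed.

Lemma comp2_th4 : comp 2 (th 4) = 0.
Proof.
apply: funext => n; rewrite /comp zeroE; case: eqP => // Hn.
by apply: th_zero => //; apply: P4_mod2.
Qed.

Lemma comp0_th4 : comp 0 (th 4) = Dm 3 (th 3).
Proof.
apply: funext => n; rewrite /comp /Dm /dvdn; case: eqP => // Hn.
have En : n = (3 * (n %/ 3))%N by rewrite {1}(divn_eq n 3) Hn addn0 mulnC.
by rewrite {1}En; apply: th_ext => //; apply: P4_P3.
Qed.

Lemma foldr_prod (s : seq nat) (F : nat -> fps) :
  foldr smul sone [seq F k | k <- s] = \prod_(k <- s) F k.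
Proof. by elim: s => [|k s IH]; rewrite ?big_nil ?big_cons //= IH. Qed.

Lemma f_part_prodS i M : (0 < i)%N -> f_part i M = prodS (fun k => 1 - qpow (i * k)) M.
Proof.
move=> Hi; rewrite /f_part foldr_prod /prodS /index_iota subn1 /=.
apply: eq_big_seq => k; rewrite mem_iota => /andP [Hk _].
rewrite /one_minus_qk; apply: funext => n; rewrite subE oneE /sone qpowE.
have Hik : (0 < i * k)%N by rewrite muln_gt0 Hi Hk.
case: n => [|n] /=; first by rewrite eq_sym (negbTE (lt0n_neq0 Hik)) subr0.
by case: eqP; rewrite ?sub0r ?subr0.
Qed.

Lemma finv_part_prodS i M : finv_part i M = prodS (fun k => inv_one_minus_qk (i * k)) M.
Proof. by rewrite /finv_part foldr_prod /prodS /index_iota subn1. Qed.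

Definition F : fps := fk 2 * (fk 6 * (fk 6 * (fk 6 * (fik 1 * (fik 3 * (fik 4 * fik 12)))))).

Lemma P_F : P =1 F.
Proof.
move=> n; rewrite /P /gen_part /F !f_part_prodS // !finv_part_prodS -!mulE.
have Hf : forall k, (0 < k)%N -> eqm n.+1 (prodS (fun j => 1 - qpow (k * j)) n) (fk k).
  by move=> k Hk; apply: eqm_sym; apply: Prod_eqm => //; apply: wf_f.
have Hfi : forall k, (0 < k)%N -> eqm n.+1 (prodS (fun j => inv_one_minus_qk (k * j)) n) (fik k).
  by move=> k Hk; apply: eqm_sym; apply: Prod_eqm => //; apply: wf_fi.
by repeat (apply: eqmM; first by [apply: Hf | apply: Hfi]); [apply: Hfi|].
Qed.

Lemma const1M (x y : fps) : x 0%N = 1 -> y 0%N = 1 -> (x * y) 0%N = 1.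
Proof. by move=> Hx Hy; rewrite mul0E Hx Hy mulr1. Qed.
Lemma const1X (x : fps) k : x 0%N = 1 -> (x ^+ k) 0%N = 1.
Proof. by move=> Hx; elim: k => [|k IH]; [rewrite expr0|rewrite exprS const1M]. Qed.

Lemma DmX m x k : (0 < m)%N -> Dm m (x ^+ k) = Dm m x ^+ k.
Proof. by move=> Hm; elim: k => [|k IH]; [rewrite !expr0 Dm1|rewrite !exprS DmM // IH]. Qed.
Lemma sgX x k : sg (x ^+ k) = sg x ^+ k.
Proof. by elim: k => [|k IH]; [rewrite !expr0 sg1|rewrite !exprS sgM IH]. Qed.
Lemma Norm3X x k : Norm3 (x ^+ k) = Norm3 x ^+ k.
Proof. by elim: k => [|k IH]; [rewrite !expr0 Norm3_1|rewrite !exprS Norm3M IH]. Qed.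

Definition G : fps := sg F.

Lemma sg_f3 : sg (fk 3) * fk 3 * fk 12 = fk 6 ^+ 3.
Proof.
have E k : (0 < k)%N -> fk (3 * k) = Dm 3 (fk k) by move=> Hk; rewrite Dm_fk.
rewrite (E 1 isT) (E 4 isT) (E 2 isT) sgDm3 -!DmM // -DmX // sg_f1 //.
Qed.

Lemma sg_inv k : (0 < k)%N -> sg (fk k) * sg (fik k) = 1.
Proof. by move=> Hk; rewrite -sgM fk_fik // sg1. Qed.

Lemma G_eq : G * fk 2 ^+ 2 = fk 1 * fk 3.
Proof.
have sgF : G = fk 2 * fk 6 ^+ 3 * sg (fik 1) * sg (fik 3) * fik 4 * fik 12.
  rewrite /G /F !sgM (sg_fk_even (k := 1)) // (sg_fk_even (k := 3)) //.
  rewrite (sg_fik_even (k := 2)) // (sg_fik_even (k := 6)) //; ring.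
have u0 : (fk 2 * fk 6 ^+ 3) 0%N = 1 by rewrite const1M ?const1X ?fk0.
apply: (fps_cancel u0).
have I1 := sg_inv (k := 1) isT; have I3 := sg_inv (k := 3) isT.
have I4 := fk_fik (k := 4) isT; have I12 := fk_fik (k := 12) isT.
have K : G * (sg (fk 1) * sg (fk 3) * fk 4 * fk 12) = fk 2 * fk 6 ^+ 3.
  rewrite sgF; transitivity (fk 2 * fk 6 ^+ 3 * (sg (fk 1) * sg (fik 1)) * (sg (fk 3) * sg (fik 3)) *
    (fk 4 * fik 4) * (fk 12 * fik 12)); first ring.
  by rewrite I1 I3 I4 I12; ring.
transitivity (G * (sg (fk 1) * fk 1 * fk 4) * (sg (fk 3) * fk 3 * fk 12)).
  by rewrite sg_f1 sg_f3; ring.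
transitivity (G * (sg (fk 1) * sg (fk 3) * fk 4 * fk 12) * (fk 1 * fk 3)); first ring.
by rewrite K.
Qed.

Lemma supp0_fk3 : supp 0 (fk 3).
Proof. by rewrite -(Dm_fk (m := 3) (k := 1)) //; apply: supp_Dm3. Qed.

Lemma main_C : comp 0 G = Dm 3 G ^+ 3.
Proof.
set psi := th 4.
set a0 := comp 0 psi; set a1 := comp 1 psi.
have c2 : comp 2 psi = 0 by apply: comp2_th4.
have Hpsi : psi = a0 + a1 by rewrite {1}(comp_decomp psi) c2 addr0.
have Gpsi : G * psi = fk 3.
  apply: (@fps_cancel (fk 1)); first exact: fk0.
  transitivity (G * (th 4 * fk 1)); first by rewrite /psi; ring.
  by rewrite th4_id G_eq; ring.
set Npsi := Norm3 psi.
have ENpsi : Npsi = a0 ^+ 3 + a1 ^+ 3 by rewrite /Npsi /Norm3 c2 -/a0 -/a1; ring.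
set ad := a0 ^+ 2 - a0 * a1 + a1 ^+ 2.
have Ead : psi * ad = Npsi by rewrite ENpsi {1}Hpsi /ad; ring.
have E1' : G * Npsi = fk 3 * ad by rewrite -Ead mulrA Gpsi.
set C := comp 0 G.
have E1 : Npsi * C = fk 3 * a0 ^+ 2.
  have := congr1 (comp 0) E1'.
  rewrite mulrC (@supp0_mul 0 Npsi G isT (@Norm3_supp psi)) (@supp0_mul 0 (fk 3) ad isT supp0_fk3) => ->.
  congr (_ * _); rewrite /ad !compD compN !expr2.
  rewrite (@compT 0 0 0 psi psi isT) (@compT 0 0 1 psi psi isT) (@compT 0 1 1 psi psi isT) /=.
  by rewrite subr0 addr0.
have E2 : Npsi * Norm3 (fk 1) = Norm3 (fk 2) ^+ 2.
  by rewrite -Norm3M th4_id Norm3X.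
have E3 := Norm3_f1.
have E4 := Norm3_f2.
have E5 : a0 * fk 3 * fk 18 = fk 6 * fk 9 ^+ 2.
  have := congr1 (Dm 3) th3_id.
  rewrite !DmM // ?DmX // !Dm_fk // -comp0_th4 /= => E.
  by rewrite /a0 /psi E expr2.
have E6 : Dm 3 G * fk 6 ^+ 2 = fk 3 * fk 9.
  have := congr1 (Dm 3) G_eq.
  rewrite !DmM // ?DmX // !Dm_fk //= => ->; by rewrite expr2.
set H := Dm 3 G.
set u := fk 6 ^+ 8 * fk 9 * fk 3 ^+ 2.
have u0 : u 0%N = 1 by rewrite /u !const1M ?const1X ?fk0.
apply: (@fps_cancel u) => //.
transitivity (fk 3 ^+ 5 * fk 6 ^+ 2 * fk 9 ^+ 4).
  transitivity (C * (fk 6 ^+ 4) ^+ 2 * fk 9 * fk 3 ^+ 2); first by rewrite /u; ring.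
  rewrite -E4.
  transitivity (C * Norm3 (fk 2) ^+ 2 * fk 18 ^+ 2 * fk 9 * fk 3 ^+ 2); first ring.
  rewrite -E2.
  transitivity ((Npsi * C) * (Norm3 (fk 1) * fk 9) * fk 18 ^+ 2 * fk 3 ^+ 2); first ring.
  rewrite E1 E3.
  transitivity (fk 3 ^+ 5 * (a0 * fk 3 * fk 18) ^+ 2); first ring.
  by rewrite E5; ring.
transitivity ((H * fk 6 ^+ 2) ^+ 3 * fk 6 ^+ 2 * fk 9 * fk 3 ^+ 2).
  by rewrite E6; ring.
by rewrite /u; ring.
Qed.

Lemma theorem_main (n : nat) : P (3 * n)%N = spow P 3%N n.
Proof.
have PF : P = F := funext P_F.
have S3 : spow F 3 = F ^+ 3 by rewrite /spow /= !exprS expr0.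
rewrite PF S3.
have FG : F = sg G by rewrite /G sgK.
rewrite FG -sgX /sg.
have E : G (3 * n)%N = (G ^+ 3) n.
  have := congr1 (fun f : fps => f (3 * n)%N) main_C.
  rewrite /= -DmX // Dm_at // /comp.
  by rewrite mulnC modnMl /= => <-.
rewrite E; congr (_ * _).
by rewrite exprM.
Qed.

Local Close Scope ring_scope.

Theorem theorem4p4 : convolutive 3 P.
Proof. move=> n; exact: theorem_main. Qed.
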